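(* For every positive integer $n$ and every $d\ge0$, \[ \mathrm{ch}\,\mathrm{Ind}^d1_n=\sum_{\mathbf x\in\mathbf N^n,\ |\mathbf x|=d}p_n(\mathbf x)\,t^{\mathbf x},\qquad \mathrm{ch}\,\mathrm{Ind}^d\mathrm{sgn}_n=\sum_{\mathbf x\in\mathbf N^n,\ |\mathbf x|=d}q_n(\mathbf x)\,t^{\mathbf x}. \]
   Context: $\mathbf N$ is the set of non-negative integers; for $\mathbf x\in\mathbf N^n$, $t^{\mathbf x}=t_1^{x_1}\dotsb t_n^{x_n}$ and $|\mathbf x|=x_1+\dots+x_n$. $S_n$ is regarded as the subgroup of permutation matrices in $\mathrm{GL}_n(\mathbf C)$; $1_n$ and $\mathrm{sgn}_n$ are its trivial and sign representations. $M_n$ is the space of $n\times n$ complex matrices and $P^d(M_n)$ the space of homogeneous polynomials of degree $d$ in the entries of $Q\in M_n$. For a representation $(\rho,V)$ of $S_n$, $\mathrm{Ind}^dV=\{f\in P^d(M_n)\otimes V: f(wQ)=\rho(w)f(Q)\ \forall w\in S_n,Q\in M_n\}$ (elements viewed as $V$-valued polynomial functions on $M_n$) with $\mathrm{GL}_n(\mathbf C)$-action $(\mathrm{Ind}^d\rho(g)f)(Q)=f(Qg)$. The character of a polynomial representation $\rho$ of $\mathrm{GL}_n(\mathbf C)$ is $\mathrm{ch}\,\rho(t_1,\dots,t_n)=\mathrm{trace}\,\rho(\mathrm{diag}(t_1,\dots,t_n))$. The functions $p_k,q_k:\mathbf N^n\to\mathbf N$ are defined by $\sum_{\mathbf x}\sum_k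 p_k(\mathbf x)t^{\mathbf x}u^k=\prod_{\mathbf x\in\mathbf N^n}(1-t^{\mathbf x}u)^{-1}$ and $\sum_{\mathbf x}\sum_kq_k(\mathbf x)t^{\mathbf x}u^k=\prod_{\mathbf x\in\mathbf N^n}(1+t^{\mathbf x}u)$; i.e. $p_k(\mathbf x)$ is the number of vector partitions of $\mathbf x$ (unordered decompositions into nonzero vectors of $\mathbf N^n$) with at most $k$ parts, and $q_k(\mathbf x)$ the number of vector partitions of $\mathbf x$ into exactly $k$ or $k-1$ distinct parts. *)

(* Defs.v *)
From HB Require Import structures.
From mathcomp Require Import all_boot all_order all_fingroup all_algebra.
From Stdlib Require Import ClassicalEpsilon.

Set Implicit Arguments.
Unset Strict Implicit.
Unset Printing Implicit Defensive.

Import GRing.Theory Num.Theory.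
Local Open Scope ring_scope.

Definition bvec (n b : nat) := {ffun 'I_n -> 'I_b.+1}.

(* p_k(x): number of vector partitions of x (multisets of nonzero vectors of
   N^n summing to x) with at most k parts.  A multiset is encoded by its
   multiplicity function; all parts and multiplicities are bounded by |x|. *)
Definition pcount (n k : nat) (x : 'I_n -> nat) : nat :=
  let b := (\sum_i x i)%N in
  #|[set mu : {ffun bvec n b -> 'I_b.+1} |
      [&& mu [ffun=> ord0] == ord0,
          [forall i, (\sum_(y : bvec n b) mu y * y i == x i)%N]
        & (\sum_(y : bvec n b) mu y <= k)%N]]|.

(* q_k(x): number of vector partitions of x into exactly k or k-1 distinct
   (nonzero) parts; a partition into distinct parts is a set of parts. *)
Definition qcount (n k : nat) (x : 'I_n -> nat) : nat :=
  let b := (\sum_i x i)%N in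
  #|[set S : {set bvec n b} |
      [&& [ffun=> ord0] \notin S,
          [forall i, (\sum_(y in S) y i == x i)%N]
        & (#|S| == k) || (#|S|.+1 == k)]]|.

(* monomials of degree d in the entries Q_ij of an n x n matrix *)
Definition DMon (n d : nat) :=
  {m : {ffun 'I_n * 'I_n -> 'I_d.+1} | (\sum_ij m ij == d)%N}.

(* P^d(M_n): coefficient vectors on the monomials of degree d *)
Definition Pd (C : fieldType) (n d : nat) := {ffun DMon n d -> C^o}.

Definition ev (C : fieldType) (n d : nat) (f : Pd C n d) (Q : 'M[C]_n) : C :=
  \sum_(m : DMon n d) f m * \prod_(ij : 'I_n * 'I_n) Q ij.1 ij.2 ^+ val m ij.

Definition rep_val (C : fieldType) (n : nat) (sg : bool) (s : 'S_n) : C :=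
  if sg then (-1) ^+ odd_perm s else 1.

Definition in_Ind (C : fieldType) (n d : nat) (sg : bool) (f : Pd C n d) : Prop :=
  forall (s : 'S_n) (Q : 'M[C]_n),
    ev f (perm_mx s *m Q) = rep_val C sg s * ev f Q.

Definition Ind (C : fieldType) (n d : nat) (sg : bool) : {vspace Pd C n d} :=
  epsilon (inhabits 0%VS)
    (fun U : {vspace Pd C n d} => forall f, f \in U <-> @in_Ind C n d sg f).

Definition act (C : fieldType) (n d : nat) (g : 'M[C]_n) (f : Pd C n d) : Pd C n d :=
  epsilon (inhabits 0) (fun f' : Pd C n d => forall Q, ev f' Q = ev f (Q *m g)).

Definition trace_on (K : fieldType) (vT : vectType K) (U : {vspace vT})
    (f : vT -> vT) : K :=
  \sum_(i < \dim U) coord (vbasis U) i (f (vbasis U)`_i).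

Definition ch_Ind (C : fieldType) (n d : nat) (sg : bool) (t : 'I_n -> C) : C :=
  trace_on (Ind C n d sg) (@act C n d (diag_mx (\row_i t i))).

Definition wsum (C : fieldType) (n d : nat) (c : ('I_n -> nat) -> nat)
    (t : 'I_n -> C) : C :=
  \sum_(x : {ffun 'I_n -> 'I_d.+1} | (\sum_i (x i : nat) == d)%N)
     (c (fun i => x i : nat))%:R * \prod_i t i ^+ x i.

(* Main.v *)
Require Import Defs.
From HB Require Import structures.
From mathcomp Require Import all_boot all_order all_fingroup all_algebra.
From mathcomp Require Import zify.
Set Implicit Arguments.
Unset Strict Implicit.
Unset Printing Implicit Defensive.
Import GRing.Theory Num.Theory.
Local Open Scope ring_scope.

Lemma digits_eq (B K : nat) (h1 h2 : 'I_K -> nat) :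
  (forall k, h1 k < B)%N -> (forall k, h2 k < B)%N ->
  (\sum_(k < K) h1 k * B ^ k = \sum_(k < K) h2 k * B ^ k)%N ->
  forall k, h1 k = h2 k.
Proof.
elim: K h1 h2 => [|K IH] h1 h2 b1 b2 E k; first by case: k.
rewrite !big_ord_recl !expn0 !muln1 in E.
have sh (h : 'I_K.+1 -> nat) : (\sum_(i < K) h (lift ord0 i) * B ^ (bump 0 i)
    = B * \sum_(i < K) h (lift ord0 i) * B ^ i)%N.
  by rewrite big_distrr /=; apply: eq_bigr => i _; rewrite /bump /= add1n expnS; lia.
rewrite !sh in E.
have b0 := b1 ord0.
have e0 : h1 ord0 = h2 ord0.
  have := congr1 (modn^~ B) E.
  by rewrite !(addnC (h1 _)) !(addnC (h2 _)) !(mulnC B) !modnMDl !modn_small // b2.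
have e1 : (\sum_(i < K) h1 (lift ord0 i) * B ^ i = \sum_(i < K) h2 (lift ord0 i) * B ^ i)%N.
  rewrite e0 in E; move/addnI: E => /eqP; rewrite eqn_mul2l => /orP[/eqP B0|/eqP //].
  by rewrite B0 in b0.
case: (unliftP ord0 k) => [k'|] ->; last by [].
by apply: (IH (fun i => h1 (lift ord0 i)) (fun i => h2 (lift ord0 i))).
Qed.

Definition kexp n d (m : DMon n d) : nat :=
  \sum_(ij : 'I_n * 'I_n) (val m ij : nat) * d.+1 ^ enum_rank ij.

Lemma kexp_inj n d : injective (@kexp n d).
Proof.
move=> m1 m2 E.
have re (m : DMon n d) : kexp m =
    (\sum_(k < #|{: 'I_n * 'I_n}|) (val m (enum_val k) : nat) * d.+1 ^ k)%N.
  rewrite /kexp (reindex (@enum_val _ {: 'I_n * 'I_n})) /=; last first.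
    by exists enum_rank => x _; rewrite ?enum_valK ?enum_rankK.
  by apply: eq_bigr => k _; rewrite enum_valK.
rewrite !re in E.
have := digits_eq (fun k => ltn_ord _) (fun k => ltn_ord _) E => H.
apply: val_inj; apply/ffunP => ij; apply: val_inj => /=.
by have := H (enum_rank ij); rewrite enum_rankK.
Qed.

Definition mono (C : fieldType) n d (m : DMon n d) (Q : 'M[C]_n) : C :=
  \prod_(ij : 'I_n * 'I_n) Q ij.1 ij.2 ^+ val m ij.

Lemma ev_inj (C : numClosedFieldType) n d (f : Pd C n d) :
  (forall Q, ev f Q = 0) -> f = 0.
Proof.
move=> H.
pose p : {poly C} := \sum_(m : DMon n d) f m *: 'X^(kexp m).
have pz z : p.[z] = 0.
  rewrite -(H (\matrix_(i, j) z ^+ (d.+1 ^ enum_rank (i, j)))) /ev.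
  rewrite horner_sum; apply: eq_bigr => m _.
  rewrite hornerZ hornerXn; congr (_ * _).
  rewrite /kexp -prodrXr; apply: eq_bigr => [[i j]] _.
  by rewrite mxE -exprM mulnC.
have p0 : p = 0.
  apply/eqP; apply: contraT => pn0.
  have := max_poly_roots (rs := [seq i%:R | i <- iota 0 (size p)]) pn0.
  rewrite size_map size_iota ltnn; apply.
    by apply/allP => x /mapP [i _ ->]; rewrite /root pz.
  rewrite map_inj_uniq ?iota_uniq // => a b /eqP.
  by rewrite eqr_nat => /eqP.
apply/ffunP => m0; rewrite ffunE.
have := congr1 (fun q : {poly C} => q`_(kexp m0)) p0.
rewrite coef0 coef_sum (bigD1 m0) //= big1 ?addr0.
  by rewrite coefZ coefXn eqxx mulr1.
move=> m /negbTE ne; rewrite coefZ coefXn.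
case: eqP => [/kexp_inj e|]; last by rewrite mulr0.
by rewrite e eqxx in ne.
Qed.

From Stdlib Require Import ClassicalEpsilon.

Lemma evB (C : fieldType) n d (f g : Pd C n d) Q : ev (f - g) Q = ev f Q - ev g Q.
Proof. by rewrite /ev -sumrB; apply: eq_bigr => m _; rewrite !ffunE mulrBl. Qed.

Lemma evZ (C : fieldType) n d a (f : Pd C n d) Q : ev (a *: f) Q = a * ev f Q.
Proof. by rewrite /ev mulr_sumr; apply: eq_bigr => m _; rewrite !ffunE mulrA. Qed.

Lemma ev_eq (C : numClosedFieldType) n d (f g : Pd C n d) :
  (forall Q, ev f Q = ev g Q) -> f = g.
Proof.
move=> H; apply/eqP; rewrite -subr_eq0; apply/eqP; apply: ev_inj => Q.
by rewrite evB H subrr.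
Qed.

Definition Wt (C : fieldType) n d (t : 'I_n -> C) (m : DMon n d) : C :=
  \prod_(ij : 'I_n * 'I_n) t ij.2 ^+ val m ij.

Definition Dt (C : fieldType) n d (t : 'I_n -> C) (f : Pd C n d) : Pd C n d :=
  [ffun m => f m * Wt t m].

Lemma act_diag (C : numClosedFieldType) n d (t : 'I_n -> C) (f : Pd C n d) :
  Defs.act (diag_mx (\row_i t i)) f = Dt t f.
Proof.
have spec : forall Q, ev (Dt t f) Q = ev f (Q *m diag_mx (\row_i t i)).
  move=> Q; rewrite /ev; apply: eq_bigr => m _; rewrite ffunE -mulrA; congr (_ * _).
  rewrite mul_mx_diag /Wt -big_split /=; apply: eq_bigr => ij _.
  by rewrite !mxE exprMn mulrC.
rewrite /Defs.act; apply: ev_eq => Q.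
have := @epsilon_spec _ (inhabits 0)
   (fun f' : Pd C n d => forall Q, ev f' Q = ev f (Q *m diag_mx (\row_i t i))).
by move=> -> //; exists (Dt t f).
Qed.

Lemma pm_proof n d (s : 'S_n) (m : DMon n d) :
  (\sum_ij ([ffun ij => val m (s ij.1, ij.2)] ij : nat) == d)%N.
Proof.
have inj : injective (fun ij : 'I_n * 'I_n => (s ij.1, ij.2)).
  by move=> [a b] [c e] /= [/perm_inj -> ->].
apply/eqP; rewrite -[RHS](eqP (valP m)) [RHS](reindex_inj inj) /=.
by apply: eq_bigr => ij _; rewrite ffunE.
Qed.

Definition pm n d (s : 'S_n) (m : DMon n d) : DMon n d :=
  exist _ [ffun ij => val m (s ij.1, ij.2)] (pm_proof s m).

Lemma pmE n d s (m : DMon n d) ij : val (pm s m) ij = val m (s ij.1, ij.2).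
Proof. by rewrite /= ffunE. Qed.

Lemma pmM n d (s t : 'S_n) (m : DMon n d) : pm s (pm t m) = pm (s * t) m.
Proof. by apply: val_inj; apply/ffunP => ij; rewrite !pmE /= permM. Qed.

Lemma pm1 n d (m : DMon n d) : pm 1 m = m.
Proof. by apply: val_inj; apply/ffunP => ij; rewrite pmE perm1; case: ij. Qed.

Lemma pmK n d (s : 'S_n) : cancel (@pm n d s) (pm s^-1).
Proof. by move=> m; rewrite pmM mulVg pm1. Qed.

Lemma pmKV n d (s : 'S_n) : cancel (@pm n d s^-1) (pm s).
Proof. by move=> m; rewrite pmM mulgV pm1. Qed.

Lemma mono_perm (C : fieldType) n d (s : 'S_n) (m : DMon n d) (Q : 'M[C]_n) :
  mono m (perm_mx s *m Q) = mono (pm s^-1 m) Q.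
Proof.
have inj : injective (fun ij : 'I_n * 'I_n => (s ij.1, ij.2)).
  by move=> [a b] [c e] /= [/perm_inj -> ->].
rewrite /mono [RHS](reindex_inj inj) /=; apply: eq_bigr => [[i j]] _ /=.
by rewrite -row_permE !mxE pmE /= permK.
Qed.

Lemma ev_perm (C : fieldType) n d (s : 'S_n) (f : Pd C n d) Q :
  ev f (perm_mx s *m Q) = ev [ffun m => f (pm s m)] Q.
Proof.
rewrite /ev (reindex_inj (can_inj (pmK s))) /=; apply: eq_bigr => m _.
by rewrite ffunE; congr (_ * _); rewrite -[LHS]/(mono (pm s m) _) mono_perm pmK.
Qed.

Definition rho (C : fieldType) n (sg : bool) (s : 'S_n) : C := rep_val C sg s.

Lemma rhoM (C : fieldType) n sg (s t : 'S_n) : rho C sg (s * t) = rho C sg s * rho C sg t.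
Proof. by rewrite /rho /rep_val; case: sg; rewrite ?mulr1 // odd_permM signr_addb. Qed.

Lemma rhoV (C : fieldType) n sg (s : 'S_n) : rho C sg s^-1 = rho C sg s.
Proof. by rewrite /rho /rep_val odd_permV. Qed.

Lemma rho2 (C : fieldType) n sg (s : 'S_n) : rho C sg s * rho C sg s = 1.
Proof. by rewrite /rho /rep_val; case: sg; rewrite ?mulr1 // -expr2 sqrr_sign. Qed.

Definition ichar (C : fieldType) n d sg (f : Pd C n d) :=
  forall s m, f (pm s m) = rho C sg s * f m.

Lemma in_IndE (C : numClosedFieldType) n d sg (f : Pd C n d) :
  in_Ind sg f <-> ichar sg f.
Proof.
split => H s.
  have E : [ffun m => f (pm s m)] = rho C sg s *: f.
    by apply: ev_eq => Q; rewrite evZ -ev_perm H.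
  by move=> m; have := congr1 (fun g : Pd C n d => g m) E; rewrite !ffunE.
move=> Q; rewrite ev_perm -/(rho C sg s) -evZ; congr ev.
by apply/ffunP => m; rewrite !ffunE H.
Qed.

Lemma scaleE (C : fieldType) (a : C) (b : C^o) : a *: b = a * b.
Proof. by []. Qed.

Lemma ffunZE (I : finType) (C : fieldType) (a : C) (f : {ffun I -> C^o}) x :
  (a *: f) x = a * f x.
Proof. by rewrite ffunE. Qed.

Lemma ffunZE' (I : finType) (C : fieldType) (a : C^o) (f : {ffun I -> C^o}) x :
  (a *: f) x = a * f x.
Proof. by rewrite ffunE. Qed.

Definition delta (C : fieldType) n d (m : DMon n d) : Pd C n d :=
  [ffun m' => (m' == m)%:R].
Arguments delta {C n d} m.

Definition proj (C : fieldType) n d sg (f : Pd C n d) : Pd C n d :=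
  [ffun m => (n`!%:R)^-1 * \sum_(s : 'S_n) rho C sg s * f (pm s m)].

Lemma fact_neq0 (C : numClosedFieldType) n : (n`!%:R : C) != 0.
Proof. by rewrite pnatr_eq0 -lt0n fact_gt0. Qed.

Lemma proj_char (C : fieldType) n d sg (f : Pd C n d) : ichar sg (proj sg f).
Proof.
move=> t m; rewrite !ffunE mulrCA; congr (_ * _).
rewrite mulr_sumr (reindex_inj (mulIg (t^-1)%g)) /=; apply: eq_bigr => u _.
by rewrite pmM -mulgA mulVg mulg1 rhoM rhoV mulrCA mulrA.
Qed.

Lemma proj_id (C : fieldType) n d sg (f : Pd C n d) :
  (n`!%:R : C) != 0 -> ichar sg f -> proj sg f = f.
Proof.
move=> hn H; apply/ffunP => m; rewrite ffunE.
rewrite (eq_bigr (fun _ => f m)); last by move=> s _; rewrite H mulrA rho2 mul1r.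
by rewrite sumr_const card_Sn -[f m *+ _]mulr_natl mulrA mulVf ?mul1r.
Qed.

Lemma ffun_expand (C : fieldType) n d (f : Pd C n d) :
  f = \sum_(m : DMon n d) (f m : C) *: delta m.
Proof.
apply/ffunP => m0; rewrite sum_ffunE (bigD1 m0) //= big1 ?addr0.
  by rewrite !ffunE scaleE eqxx mulr1.
by move=> m ne; rewrite !ffunE scaleE eq_sym (negbTE ne) mulr0.
Qed.

Lemma proj_expand (C : fieldType) n d sg (f : Pd C n d) :
  proj sg f = \sum_(m : DMon n d) (f m : C) *: proj sg (delta m).
Proof.
apply/ffunP => m0; rewrite sum_ffunE ffunE.
under [RHS]eq_bigr => m _ do rewrite ffunZE ffunE mulrCA mulr_sumr.
rewrite -mulr_sumr exchange_big /=; congr (_ * _); apply: eq_bigr => s _.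
rewrite (bigD1 (pm s m0)) //= big1 => [|m ne]; rewrite ffunE.
  by rewrite eqxx mulr1 addr0 mulrC.
by rewrite eq_sym (negbTE ne) !mulr0.
Qed.

Lemma ichar_sum (C : fieldType) n d sg (I : Type) (r : seq I) (c : I -> C)
    (F : I -> Pd C n d) :
  (forall i, ichar sg (F i)) -> ichar sg (\sum_(i <- r) c i *: F i).
Proof.
move=> H s m; rewrite !sum_ffunE mulr_sumr; apply: eq_bigr => i _.
by rewrite !ffunZE H mulrCA.
Qed.

Lemma Ind_spec (C : numClosedFieldType) n d sg (f : Pd C n d) :
  f \in Ind C n d sg <-> ichar sg f.
Proof.
have ex : exists U : {vspace Pd C n d}, forall f, f \in U <-> in_Ind sg f.
  exists <<[seq proj sg (delta m) | m : DMon n d]>>%VS => g.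
  rewrite in_IndE; split.
    move/(coord_span (X := in_tuple _)) => ->.
    apply: ichar_sum => i.
    by have /mapP [m _ ->] := mem_nth 0 (ltn_ord i); apply: proj_char.
  move=> H; rewrite -(proj_id (fact_neq0 C n) H) proj_expand.
  apply: memv_suml => m _; apply: memvZ; apply: memv_span.
  exact: image_f.
have := epsilon_spec (inhabits 0%VS) _ ex.
by rewrite -/(Ind C n d sg) => ->; rewrite in_IndE.
Qed.

Lemma trace_gen (C : fieldType) n d (U : {vspace Pd C n d})
    (T h : Pd C n d -> Pd C n d) :
  (forall u, h u = \sum_(m : DMon n d) (u m : C) *: h (delta m)) ->
  (forall v, h v \in U) -> (forall u, u \in U -> T u = h u) ->
  trace_on U T = \sum_(m : DMon n d) h (delta m) m.
Proof.
move=> hexp hU hT; rewrite /trace_on.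
have BU (i : 'I_(\dim U)) : (vbasis U)`_i \in U.
  by apply: vbasis_mem; apply: mem_nth; rewrite size_tuple.
transitivity (\sum_(i < \dim U) \sum_(m : DMon n d)
    ((vbasis U)`_i m : C) * coord (vbasis U) i (h (delta m))).
  apply: eq_bigr => i _; rewrite hT // hexp linear_sum; apply: eq_bigr => m _.
  by rewrite linearZ.
rewrite exchange_big /=; apply: eq_bigr => m _.
rewrite {2}(coord_vbasis (hU (delta m))) sum_ffunE; apply: eq_bigr => i _.
by rewrite ffunZE mulrC.
Qed.

Lemma Wt_pm (C : fieldType) n d (t : 'I_n -> C) s (m : DMon n d) :
  Wt t (pm s m) = Wt t m.
Proof.
have inj : injective (fun ij : 'I_n * 'I_n => (s ij.1, ij.2)).
  by move=> [a b] [c e] /= [/perm_inj -> ->].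
rewrite /Wt [RHS](reindex_inj inj) /=; apply: eq_bigr => ij _.
by rewrite pmE.
Qed.

Lemma Dt_char (C : fieldType) n d sg (t : 'I_n -> C) (f : Pd C n d) :
  ichar sg f -> ichar sg (Dt t f).
Proof. by move=> H s m; rewrite !ffunE H Wt_pm mulrA. Qed.

Lemma ch_formula (C : numClosedFieldType) n d sg (t : 'I_n -> C) :
  @ch_Ind C n d sg t = \sum_(m : DMon n d) Wt t m *
     ((n`!%:R)^-1 * \sum_(s : 'S_n) rho C sg s * (pm s m == m)%:R).
Proof.
rewrite /ch_Ind (@trace_gen C n d _ _ (fun u => Dt t (proj sg u))).
- apply: eq_bigr => m _; rewrite !ffunE mulrC.
  by under eq_bigr => s _ do rewrite ffunE.
- move=> u; rewrite {1}(proj_expand sg u); apply/ffunP => m0.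
  rewrite ffunE !sum_ffunE mulr_suml; apply: eq_bigr => m _.
  by rewrite !ffunZE [Dt t _ m0]ffunE mulrA.
- by move=> v; apply/Ind_spec; apply: Dt_char; apply: proj_char.
- move=> u /Ind_spec H; rewrite act_diag proj_id //.
  exact: fact_neq0.
Qed.

Definition z0 n d : bvec n d := [ffun=> ord0].
Arguments z0 {n d}.

Definition row n d (m : DMon n d) (i : 'I_n) : bvec n d := [ffun j => val m (i, j)].

Definition rt n d (m : DMon n d) : n.-tuple (bvec n d) := [tuple row m i | i < n].

Definition cs n d (m : DMon n d) (j : 'I_n) : nat := (\sum_i (val m (i, j) : nat))%N.

Lemma sum_count (T : finType) (s : seq T) (F : T -> nat) :
  (\sum_(v <- s) F v = \sum_y count_mem y s * F y)%N.
Proof.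
elim: s => [|a s IH]; first by rewrite big_nil big1 // => y _.
rewrite big_cons IH (bigD1 a) //= [in RHS](bigD1 a) //= eqxx add1n mulSn addnA.
congr (_ + _)%N; apply: eq_bigr => y /negbTE ne.
by rewrite eq_sym ne.
Qed.

Lemma sum_tuple (T : Type) n (t : n.-tuple T) (F : T -> nat) :
  (\sum_(v <- t) F v = \sum_(i < n) F (tnth t i))%N.
Proof.
by rewrite big_tuple.
Qed.

Lemma cs_rt n d (m : DMon n d) j : cs m j = (\sum_(v <- rt m) v j)%N.
Proof. by rewrite sum_tuple; apply: eq_bigr => i _; rewrite tnth_mktuple ffunE. Qed.

Lemma tot_rt n d (m : DMon n d) : (\sum_(v <- rt m) \sum_j (v j : nat))%N = d.
Proof.
rewrite sum_tuple -[RHS](eqP (valP m)) pair_big /=.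
by apply: eq_big => [ij|[i j] _] //=; rewrite tnth_mktuple ffunE.
Qed.

Lemma cs_le n d (m : DMon n d) j : (cs m j <= d)%N.
Proof.
rewrite cs_rt; apply: (leq_trans _ (eq_leq (tot_rt m))).
by rewrite exchange_big /= (bigD1 j) //= leq_addr.
Qed.

Lemma tnth_rt n d (m : DMon n d) i : tnth (rt m) i = row m i.
Proof. by rewrite tnth_mktuple. Qed.

Lemma rt_inj n d : injective (@rt n d).
Proof.
move=> m1 m2 E; apply: val_inj; apply/ffunP => [[i j]].
have := congr1 (fun t => tnth t i) E; rewrite !tnth_rt => /ffunP /(_ j).
by rewrite !ffunE.
Qed.

Lemma row_pm n d s (m : DMon n d) i : row (pm s m) i = row m (s i).
Proof. by apply/ffunP => j; rewrite !ffunE /= ?ffunE. Qed.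

Lemma rt_pm n d s (m : DMon n d) : rt (pm s m) = [tuple tnth (rt m) (s i) | i < n].
Proof. by apply: eq_from_tnth => i; rewrite !tnth_mktuple row_pm. Qed.

Lemma perm_rt_pm n d s (m : DMon n d) : perm_eq (rt (pm s m)) (rt m).
Proof. by apply/tuple_permP; exists s; rewrite rt_pm. Qed.

Lemma perm_rt_orbit n d (a b : DMon n d) :
  perm_eq (rt b) (rt a) -> exists p, b = pm p a.
Proof.
move=> /tuple_permP [p E]; exists p; apply: rt_inj; rewrite rt_pm.
by apply: val_inj.
Qed.

Lemma mk_exists n d (s : seq (bvec n d)) : size s = n ->
  (\sum_(v <- s) \sum_j (v j : nat))%N = d -> exists m : DMon n d, val (rt m) = s.
Proof.
move=> sz tot.
pose f : {ffun 'I_n * 'I_n -> 'I_d.+1} := [ffun ij : 'I_n * 'I_n => nth z0 s ij.1 ij.2].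
have hf : (\sum_ij (f ij : nat) == d)%N.
  apply/eqP; rewrite -[RHS]tot (big_nth z0) sz big_mkord pair_bigA /=.
  by apply: eq_bigr => [[i j]] _; rewrite ffunE.
exists (exist _ f hf); rewrite /= -[RHS](mkseq_nth z0) sz /mkseq -val_enum_ord -map_comp.
apply: eq_map => i /=; apply/ffunP => j; rewrite !ffunE //.
Qed.

Definition pact n d (m : DMon n d) (s : 'S_n) : DMon n d := pm s^-1 m.

Lemma pact1 n d (m : DMon n d) : pact m 1 = m.
Proof. by rewrite /pact invg1 pm1. Qed.

Lemma pactM n d (m : DMon n d) a b : pact m (a * b) = pact (pact m a) b.
Proof. by rewrite /pact invMg pmM. Qed.

Definition pactA n d := TotalAction (@pact1 n d) (@pactM n d).

Lemma pact_fix n d (m : DMon n d) a : (pact m a == m) = (pm a m == m).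
Proof.
apply/eqP/eqP => H.
  by rewrite -{1}H /pact pmKV.
by rewrite /pact -{1}H pmK.
Qed.

Lemma acts_inv n d (S : {set DMon n d}) :
  (forall m a, m \in S -> pm a m \in S) -> [acts [set: 'S_n], on S | pactA n d].
Proof.
move=> H; apply/subsetP => a _; rewrite !inE /=; apply/subsetP => m Sm.
by rewrite inE /=; apply: H.
Qed.

Lemma Fix_card n d (S : {set DMon n d}) a :
  #|('Fix_(S | pactA n d)[a])%g| = (\sum_(m in S) (pm a m == m))%N.
Proof.
rewrite -sum1_card big_mkcond /= [RHS]big_mkcond /=; apply: eq_bigr => m _.
rewrite !inE; case: (m \in S) => //=.
by rewrite sub1set inE /= pact_fix; case: (pm a m == m).
Qed.

Lemma burnside n d (S : {set DMon n d}) :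
  (forall m a, m \in S -> pm a m \in S) ->
  (\sum_(m in S) #|[set s : 'S_n | pm s m == m]| =
     #|orbit (pactA n d) [set: 'S_n] @: S| * n`!)%N.
Proof.
move=> H; have := Frobenius_Cauchy (acts_inv H).
rewrite cardsT card_Sn => <-.
under [RHS]eq_bigr => a _ do rewrite Fix_card.
rewrite (exchange_big_dep xpredT) //= [LHS]big_mkcond; apply: eq_bigr => m _.
case Sm: (m \in S); last by rewrite big1 // => s; rewrite andbF.
rewrite -sum1_card big_mkcond [RHS]big_mkcond; apply: eq_bigr => s _.
by rewrite !inE andbT; case: (pm s m == m).
Qed.

Lemma card_orbits_inv (T R : finType) (S : {set T}) (orb : T -> {set T}) (Phi : T -> R) :
  (forall a, a \in S -> a \in orb a) ->
  (forall a b, a \in S -> b \in orb a -> Phi b = Phi a) ->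
  (forall a b, a \in S -> b \in S -> Phi a = Phi b -> orb a = orb b) ->
  #|orb @: S| = #|Phi @: S|.
Proof.
move=> refl inv eqv.
pose h (O : {set T}) := omap Phi [pick a in O].
have hE a : a \in S -> h (orb a) = Some (Phi a).
  move=> Sa; rewrite /h; case: pickP => [b /= Ob|/(_ a) /=]; last by rewrite refl.
  by rewrite (inv a b).
transitivity #|h @: (orb @: S)|.
  apply/esym/card_in_imset => _ _ /imsetP[a Sa ->] /imsetP[b Sb ->].
  by rewrite !hE // => [[/eqv]]; apply.
rewrite -imset_comp.
have -> : [set (h \o orb) x | x in S] = [set Some (Phi x) | x in S].
  by apply: eq_in_imset => a Sa /=; apply: hE.
by rewrite (imset_comp Some Phi) card_imset //; apply: Some_inj.
Qed.

Definition colf n d (m : DMon n d) : {ffun 'I_n -> 'I_d.+1} := [ffun j => inord (cs m j)].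

Lemma colfE n d (m : DMon n d) j : (colf m j : nat) = cs m j.
Proof. by rewrite ffunE inordK // ltnS cs_le. Qed.

Lemma cs_sum n d (m : DMon n d) : (\sum_j cs m j)%N = d.
Proof.
rewrite -[RHS](tot_rt m) [RHS]exchange_big /=; apply: eq_bigr => j _.
by rewrite cs_rt.
Qed.

Lemma colf_sum n d (m : DMon n d) : (\sum_j (colf m j : nat))%N = d.
Proof. by rewrite -[RHS](cs_sum m); apply: eq_bigr => j _; rewrite colfE. Qed.

Lemma colf_pm n d s (m : DMon n d) : colf (pm s m) = colf m.
Proof.
apply/ffunP => j; apply: val_inj => /=; rewrite !colfE !cs_rt.
by apply: perm_big; apply: perm_rt_pm.
Qed.

Lemma sum_z0 n d (y : bvec n d) : y != z0 -> (0 < \sum_j (y j : nat))%N.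
Proof.
move=> ne; rewrite lt0n sum_nat_eq0; apply: contra ne => /forallP H.
by apply/eqP/ffunP => j; apply: val_inj; rewrite ffunE /=; apply/eqP; apply: H.
Qed.

Lemma count_le n d (m : DMon n d) y : y != z0 -> (count_mem y (rt m) <= d)%N.
Proof.
move=> ne; apply: (leq_trans _ (eq_leq (tot_rt m))).
rewrite sum_count (bigD1 y) //=; apply: leq_trans (leq_addr _ _).
by rewrite leq_pmulr // sum_z0.
Qed.

Definition Phi n d (m : DMon n d) : {ffun bvec n d -> 'I_d.+1} :=
  [ffun y => inord (if y == z0 then 0%N else count_mem y (rt m))].

Lemma PhiE n d (m : DMon n d) y : y != z0 -> (Phi m y : nat) = count_mem y (rt m).
Proof. by move=> ne; rewrite ffunE (negbTE ne) inordK // ltnS count_le. Qed.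

Lemma Phi0 n d (m : DMon n d) : Phi m z0 = ord0.
Proof. by apply: val_inj; rewrite ffunE eqxx /= inordK. Qed.

Lemma Phi_pm n d s (m : DMon n d) : Phi (pm s m) = Phi m.
Proof.
apply/ffunP => y; rewrite !ffunE; case: (y == z0) => //.
by rewrite (seq.permP (perm_rt_pm s m)).
Qed.

Lemma count_z0 n d (s : seq (bvec n d)) :
  count_mem z0 s = (size s - \sum_(y | y != z0) count_mem y s)%N.
Proof.
have := sum_count s (fun _ => 1%N).
rewrite sum1_size (eq_bigr (fun y => count_mem y s)) => [|y _]; last exact: muln1.
by rewrite (bigD1 z0) //= => ->; rewrite addnK.
Qed.

Lemma Phi_perm n d (a b : DMon n d) : Phi a = Phi b -> perm_eq (rt a) (rt b).
Proof.
move=> E.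
have Ey y : y != z0 -> count_mem y (rt a) = count_mem y (rt b).
  by move=> ne; rewrite -!PhiE // E.
apply/allP => y _; apply/eqP; case: (eqVneq y z0) => [->|ne]; last exact: Ey.
rewrite !count_z0 !size_tuple; congr (_ - _)%N; apply: eq_bigr => z; exact: Ey.
Qed.

Lemma orbit_pm n d (a b : DMon n d) :
  b \in orbit (pactA n d) [set: 'S_n] a -> exists s, b = pm s a.
Proof. by case/orbitP => s _ <-; exists (s^-1)%g. Qed.

Lemma pm_orbit n d (a : DMon n d) s : pm s a \in orbit (pactA n d) [set: 'S_n] a.
Proof.
by apply/orbitP; exists (s^-1)%g; rewrite ?inE //= /pact invgK.
Qed.

Definition pset n d (x : 'I_n -> nat) : {set {ffun bvec n d -> 'I_d.+1}} :=
  [set mu : {ffun bvec n d -> 'I_d.+1} | [&& mu z0 == ord0,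
               [forall i, (\sum_(y : bvec n d) mu y * y i == x i)%N]
             & (\sum_(y : bvec n d) mu y <= n)%N]].
Arguments pset : clear implicits.

Lemma pcount_eq n d (x : 'I_n -> nat) : (\sum_i x i = d)%N -> pcount n x = #|pset n d x|.
Proof. by rewrite /pcount /= => ->. Qed.

Lemma z0E n d j : ((@z0 n d) j : nat) = 0%N.
Proof. by rewrite ffunE. Qed.

Lemma Phi_pset n d (m : DMon n d) (x : 'I_n -> nat) :
  (forall j, cs m j = x j) -> Phi m \in pset n d x.
Proof.
move=> hx; rewrite inE; apply/and3P; split.
- by rewrite Phi0.
- apply/forallP => i; apply/eqP; rewrite -hx cs_rt [RHS]sum_count.
  apply: eq_bigr => y _; case: (eqVneq y z0) => [->|ne]; first by rewrite !z0E !muln0.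
  by rewrite PhiE.
- rewrite -[X in (_ <= X)%N](size_tuple (rt m)) -sum1_size [X in (_ <= X)%N]sum_count.
  apply: leq_sum => y _; rewrite muln1; case: (eqVneq y z0) => [->|ne].
    by rewrite Phi0.
  by rewrite PhiE.
Qed.

Lemma count_flat (T : finType) (mu : T -> nat) y :
  count_mem y (flatten [seq nseq (mu z) z | z : T]) = mu y.
Proof.
rewrite count_flatten sumnE big_map big_image /= (bigD1 y) //= big1.
  by rewrite count_nseq /= eqxx mul1n addn0.
by move=> z ne; rewrite count_nseq /= (negbTE ne).
Qed.

Lemma size_flat (T : finType) (mu : T -> nat) :
  size (flatten [seq nseq (mu z) z | z : T]) = (\sum_z mu z)%N.
Proof.
rewrite size_flatten sumnE /shape big_map big_image /=.
by apply: eq_bigr => z _; rewrite size_nseq.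
Qed.

Lemma pset_pre n d (x : 'I_n -> nat) mu : (\sum_i x i = d)%N -> mu \in pset n d x ->
  exists m : DMon n d, (forall j, cs m j = x j) /\ Phi m = mu.
Proof.
move=> hx; rewrite inE => /and3P [/eqP m0 /forallP hsum hle].
pose s := flatten [seq nseq (mu z) z | z : bvec n d] ++ nseq (n - \sum_y mu y) z0.
have cnt y : y != z0 -> count_mem y s = mu y.
  move=> ne; rewrite count_cat count_flat count_nseq /= eq_sym (negbTE ne).
  by rewrite mul0n addn0.
have css j : (\sum_(v <- s) v j = x j)%N.
  rewrite sum_count -(eqP (hsum j)); apply: eq_bigr => y _.
  case: (eqVneq y z0) => [->|ne]; first by rewrite !z0E !muln0.
  by rewrite cnt.
have sz : size s = n by rewrite size_cat size_flat size_nseq subnKC.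
have tot : (\sum_(v <- s) \sum_j (v j : nat))%N = d.
  by rewrite exchange_big /= -[RHS]hx; apply: eq_bigr => j _; rewrite css.
have [m hm] := mk_exists sz tot.
exists m; split => [j|]; first by rewrite cs_rt hm css.
apply/ffunP => y; case: (eqVneq y z0) => [->|ne]; first by rewrite Phi0 m0.
by apply: val_inj; rewrite /= PhiE // hm cnt.
Qed.

Lemma colf_eqE n d (m : DMon n d) (x : {ffun 'I_n -> 'I_d.+1}) :
  (colf m == x) = [forall j, cs m j == x j].
Proof.
apply/eqP/forallP => [<- j | H]; first by rewrite colfE.
by apply/ffunP => j; apply: val_inj => /=; rewrite colfE; apply/eqP.
Qed.

Lemma count_p n d (x : {ffun 'I_n -> 'I_d.+1}) : (\sum_i (x i : nat) = d)%N ->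
  (\sum_(m : DMon n d | colf m == x) #|[set s : 'S_n | pm s m == m]|
     = n`! * pcount n (fun i => x i : nat))%N.
Proof.
move=> hx; set S := [set m : DMon n d | colf m == x].
have SE m : (m \in S) = (colf m == x) by rewrite inE.
rewrite (eq_bigl (fun m => m \in S)) => [|m]; last by rewrite SE.
rewrite burnside; last by move=> m a; rewrite !SE colf_pm.
rewrite mulnC; congr (_ * _)%N.
rewrite (card_orbits_inv (Phi := @Phi n d)).
- rewrite (pcount_eq hx); congr #|pred_of_set _|; apply/eqP; rewrite eqEsubset; apply/andP; split.
  + apply/subsetP => _ /imsetP [m Sm ->]; apply: Phi_pset => j.
    by rewrite SE colf_eqE in Sm; apply/eqP/(forallP Sm j).
  + apply/subsetP => mu /(pset_pre hx) [m [hm <-]]; apply: imset_f.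
    by rewrite SE colf_eqE; apply/forallP => j; rewrite hm.
- by move=> a _; apply: orbit_refl.
- by move=> a b _ /orbit_pm [s ->]; apply: Phi_pm.
- move=> a b _ _ /Phi_perm; rewrite perm_sym => /perm_rt_orbit [p ->].
  by apply/esym/orbit_eqP; apply: pm_orbit.
Qed.

Lemma rho1 (C : fieldType) n sg : rho C sg (1%g : 'S_n) = 1.
Proof. by rewrite /rho /rep_val odd_perm1; case: sg. Qed.

Lemma stab_uniq n d (m : DMon n d) s : uniq (rt m) -> (pm s m == m) = (s == 1%g).
Proof.
move=> /tuple_uniqP U; apply/eqP/eqP => [E | ->]; last exact: pm1.
apply/permP => i; rewrite perm1; apply: U.
by rewrite -{2}E !tnth_rt row_pm.
Qed.

Lemma sign_stab (C : numClosedFieldType) n d (m : DMon n d) :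
  \sum_(s : 'S_n) rho C true s * (pm s m == m)%:R = (uniq (rt m))%:R.
Proof.
case U: (uniq (rt m)).
  rewrite (bigD1 1%g) //= big1 => [|s ne]; first by rewrite stab_uniq // eqxx /rho /rep_val odd_perm1 mulr1 addr0.
  by rewrite stab_uniq // (negbTE ne) mulr0.
have /(uniqPn z0) [i [j [ij jn E]]] : ~~ uniq (rt m) by rewrite U.
rewrite size_tuple in jn.
pose i' := Ordinal (ltn_trans ij jn); pose j' := Ordinal jn.
have ne : i' != j' by rewrite -val_eqE /= neq_ltn ij.
have E' : row m i' = row m j'.
  by rewrite -!tnth_rt !(tnth_nth z0).
pose tau := tperm i' j'.
have fix_tau : pm tau m = m.
  apply: rt_inj; apply: eq_from_tnth => k; rewrite !tnth_rt row_pm.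
  by case: tpermP => [->|->|] //; rewrite E'.
set S := \sum_s _.
have SN : S = - S.
  rewrite {1}/S (reindex_inj (mulgI tau)) /= -sumrN; apply: eq_bigr => s _.
  rewrite -pmM -{2}fix_tau (inj_eq (can_inj (pmK tau))) odd_permM signr_addb.
  by rewrite odd_tperm ne expr1 /rho /rep_val /= mulN1r mulNr.
have : S *+ 2 == 0 by rewrite mulr2n {1}SN addNr.
by rewrite mulrn_eq0 /= => /eqP.
Qed.

Definition qset n d (x : 'I_n -> nat) : {set {set bvec n d}} :=
  [set S : {set bvec n d} | [&& z0 \notin S,
      [forall i, (\sum_(y in S) y i == x i)%N]
    & (#|S| == n) || (#|S|.+1 == n)]].
Arguments qset : clear implicits.

Lemma qcount_eq n d (x : 'I_n -> nat) : (\sum_i x i = d)%N -> qcount n x = #|qset n d x|.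
Proof. by rewrite /qcount /= => ->. Qed.

Definition Psi n d (m : DMon n d) : {set bvec n d} :=
  [set y | (y \in (rt m : seq _)) && (y != z0)].

Lemma Psi_pm n d s (m : DMon n d) : Psi (pm s m) = Psi m.
Proof. by apply/setP => y; rewrite !inE (perm_mem (perm_rt_pm s m)). Qed.

Lemma Psi_card n d (m : DMon n d) : uniq (rt m) ->
  (#|Psi m| + (z0 \in (rt m : seq _)) = n)%N.
Proof.
move=> U.
have H : #|[set y | y \in (rt m : seq _)]| = n.
  by rewrite cardsE; move/card_uniqP: U => ->; rewrite size_tuple.
rewrite -[RHS]H (cardsD1 z0) inE addnC; congr (_ + _)%N.
by apply: eq_card => y; rewrite !inE andbC.
Qed.

Lemma Psi_perm n d (a b : DMon n d) : uniq (rt a) -> uniq (rt b) ->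
  Psi a = Psi b -> perm_eq (rt a) (rt b).
Proof.
move=> Ua Ub E; apply: uniq_perm => // y.
case: (eqVneq y z0) => [->|ne].
  have := Psi_card Ua; have := Psi_card Ub; rewrite E => e1 e2.
  by move: e2; rewrite -[RHS]e1 => /addnI; case: (z0 \in _); case: (z0 \in _).
have := congr1 (fun S : {set bvec n d} => y \in S) E; rewrite /= !inE ne !andbT.
by [].
Qed.

Lemma Psi_qset n d (m : DMon n d) (x : 'I_n -> nat) : uniq (rt m) ->
  (forall j, cs m j = x j) -> Psi m \in qset n d x.
Proof.
move=> U hx; rewrite inE; apply/and3P; split.
- by rewrite inE eqxx andbF.
- apply/forallP => i; apply/eqP; rewrite -hx cs_rt big_uniq //.
  rewrite big_mkcond [RHS]big_mkcond /=; apply: eq_bigr => y _.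
  rewrite inE; case: (eqVneq y z0) => [->|ne]; last by rewrite andbT.
  by rewrite andbF z0E; case: (_ \in _).
- have e := Psi_card U; case: (z0 \in _) in e.
    by apply/orP; right; apply/eqP; rewrite -[RHS]e addn1.
  by apply/orP; left; apply/eqP; rewrite -[RHS]e addn0.
Qed.

Lemma qset_pre n d (x : 'I_n -> nat) S : (\sum_i x i = d)%N -> S \in qset n d x ->
  exists m : DMon n d, [/\ uniq (rt m), (forall j, cs m j = x j) & Psi m = S].
Proof.
move=> hx; rewrite inE => /and3P [nz /forallP hsum hc].
pose s := enum S ++ (if #|S| == n then [::] else [:: z0]).
have css j : (\sum_(v <- s) v j = x j)%N.
  rewrite big_cat big_enum /= -(eqP (hsum j)) /=.
  by case: (#|S| == n); rewrite ?big_cons big_nil ?z0E !addn0.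
have sz : size s = n.
  rewrite size_cat -cardE; case: eqP => [->|ne] /=; first by rewrite addn0.
  by case/orP: hc => /eqP e; [case: ne | rewrite addn1].
have tot : (\sum_(v <- s) \sum_j (v j : nat))%N = d.
  by rewrite exchange_big /= -[RHS]hx; apply: eq_bigr => j _; rewrite css.
have [m hm] := mk_exists sz tot.
have U : uniq s.
  rewrite cat_uniq enum_uniq /=; case: (#|S| == n) => //=.
  by rewrite mem_enum orbF andbT.
exists m; split => [|j|]; first by rewrite hm.
  by rewrite cs_rt hm css.
apply/setP => y; rewrite inE hm mem_cat mem_enum.
case: (eqVneq y z0) => [->|ne]; first by rewrite andbF (negbTE nz).
rewrite andbT; case: (#|S| == n); rewrite ?in_nil ?orbF //.
by rewrite mem_seq1 (negbTE ne) orbF.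
Qed.

Lemma count_q n d (x : {ffun 'I_n -> 'I_d.+1}) : (\sum_i (x i : nat) = d)%N ->
  #|[set m : DMon n d | (colf m == x) && uniq (rt m)]|
     = (n`! * qcount n (fun i => x i : nat))%N.
Proof.
move=> hx; set S := [set m : DMon n d | (colf m == x) && uniq (rt m)].
have SE m : (m \in S) = (colf m == x) && uniq (rt m) by rewrite inE.
have inv m a : m \in S -> pm a m \in S.
  by rewrite !SE colf_pm (perm_uniq (perm_rt_pm a m)).
have stab1 m : m \in S -> #|[set s : 'S_n | pm s m == m]| = 1%N.
  rewrite SE => /andP [_ U].
  have -> : [set s : 'S_n | pm s m == m] = [set 1%g].
    by apply/setP => s; rewrite !inE stab_uniq.
  by rewrite cards1.
have B := burnside inv.
have -> : #|S| = (#|orbit (pactA n d) [set: 'S_n] @: S| * n`!)%N.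
  by rewrite -B -sum1_card; apply: eq_bigr => m Sm; rewrite stab1.
rewrite mulnC; congr (_ * _)%N.
rewrite (card_orbits_inv (Phi := @Psi n d)).
- rewrite (qcount_eq hx); congr #|pred_of_set _|; apply/eqP; rewrite eqEsubset; apply/andP; split.
  + apply/subsetP => _ /imsetP [m Sm ->]; rewrite SE colf_eqE in Sm.
    case/andP: Sm => /forallP Sm U; apply: Psi_qset => // j; exact/eqP/Sm.
  + apply/subsetP => T /(qset_pre hx) [m [U hm <-]]; apply: imset_f.
    by rewrite SE colf_eqE U andbT; apply/forallP => j; rewrite hm.
- by move=> a _; apply: orbit_refl.
- by move=> a b _ /orbit_pm [s ->]; apply: Psi_pm.
- move=> a b; rewrite !SE => /andP [_ Ua] /andP [_ Ub] /(Psi_perm Ua Ub).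
  rewrite perm_sym => /perm_rt_orbit [p ->].
  by apply/esym/orbit_eqP; apply: pm_orbit.
Qed.

Lemma Wt_colf (C : fieldType) n d (t : 'I_n -> C) (m : DMon n d) :
  Wt t m = \prod_j t j ^+ colf m j.
Proof.
rewrite /Wt; transitivity (\prod_i \prod_j t j ^+ val m (i, j)).
  by rewrite pair_bigA; apply: eq_bigr => [[i j]].
rewrite exchange_big; apply: eq_bigr => j _ /=.
by rewrite prodrXr colfE.
Qed.

Lemma ch_group (C : numClosedFieldType) n d sg (t : 'I_n -> C)
    (c : ('I_n -> nat) -> nat) :
  (forall x : {ffun 'I_n -> 'I_d.+1}, (\sum_i (x i : nat) == d)%N ->
    \sum_(m : DMon n d | colf m == x)
        \sum_(s : 'S_n) rho C sg s * (pm s m == m)%:R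
      = (n`! * c (fun i => x i : nat))%:R) ->
  @ch_Ind C n d sg t = @wsum C n d c t.
Proof.
move=> H; rewrite ch_formula /wsum.
rewrite (partition_big (@colf n d) (fun x => (\sum_i (x i : nat) == d)%N)) => [|m _];
  last by rewrite colf_sum.
apply: eq_bigr => x hx.
rewrite (eq_bigr (fun m => \prod_i t i ^+ x i *
   ((n`!%:R)^-1 * \sum_(s : 'S_n) rho C sg s * (pm s m == m)%:R)))
  => [|m /andP [_ /eqP <-]]; last by rewrite Wt_colf.
rewrite -mulr_sumr -mulr_sumr (eq_bigl (fun m => colf m == x)) // (H x hx).
by rewrite natrM [_^-1 * _]mulrA mulVf ?mul1r ?fact_neq0 // mulrC.
Qed.

Unset Implicit Arguments.

Theorem lemma4 (C : numClosedFieldType) (n d : nat) :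
  (0 < n)%N ->
  forall t : 'I_n -> C, (forall i, t i != 0) ->
    @ch_Ind C n d false t = @wsum C n d (pcount n) t /\
    @ch_Ind C n d true t = @wsum C n d (qcount n) t.
Proof.
move=> n0 t _; split; apply: ch_group => x /eqP hx.
  rewrite -count_p // natr_sum; apply: eq_bigr => m _.
  rewrite -sum1_card natr_sum [RHS]big_mkcond /=; apply: eq_bigr => s _.
  by rewrite /rho /rep_val mul1r inE; case: (pm s m == m).
under eq_bigr => m _ do rewrite sign_stab.
rewrite -count_q // -sum1_card natr_sum big_mkcond [RHS]big_mkcond /=.
apply: eq_bigr => m _; rewrite inE; case: (colf m == x) => //=.
by case: (uniq _).
Qed.
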